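(* Let $y_1\sim\mathcal N(\mu_1,1)$ and $y_2\sim\mathcal N(\mu_2,1)$ be independent, $\hat\gamma=\arg\max_{\gamma\in\{1,2\}}y_\gamma$, and fix $\alpha\in(0,1)$, $\nu\in(0,\alpha)$. Define $\widehat\Gamma^+_\nu=\{1,2\}$ if $|y_2-y_1|\le2\sqrt2\,q^\nu(1)$ and $\widehat\Gamma^+_\nu=\{\hat\gamma\}$ otherwise. Then $$P\left\{\mu_{\hat\gamma}\in\left(y_{\hat\gamma}\pm q^{\alpha-\nu}(|\widehat\Gamma^+_\nu|)\right)\right\}\ge1-\alpha.$$
   Context: For $k\in\{1,2\}$ and $\beta\in(0,1)$, $q^\beta(k)$ denotes the $1-\beta$ quantile of $\max_{i\in[k]}|Z_i|$ with $Z_1,\dots,Z_k$ i.i.d. $\mathcal N(0,1)$. *)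

(* Defs.v *)
From HB Require Import structures.
From mathcomp Require Import all_boot all_order all_algebra.
From mathcomp Require Import all_classical all_reals all_analysis.
Set Implicit Arguments. Unset Strict Implicit. Unset Printing Implicit Defensive.
Import Order.TTheory GRing.Theory Num.Theory.
Local Open Scope classical_set_scope.
Local Open Scope ring_scope.

Definition std_normal2 {R : realType} : set (R * R) -> \bar R :=
  (normal_prob 0 1 \x normal_prob 0 1)%E.

(* CDF of max_{i in [k]} |Z_i| for k = 1, 2 (k = 1 for every k other than 2
   is never used by the statement; only k \in {1,2} is meaningful). *)
Definition maxabs_cdf {R : realType} (k : nat) (t : R) : \bar R :=
  if k == 2%N then std_normal2 [set z : R * R | Num.max `|z.1| `|z.2| <= t]
  else normal_prob 0 1 [set z : R | `|z| <= t].

(* q^beta(k): the (1 - beta) quantile of max_{i in [k]} |Z_i|,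
   the usual (generalized-inverse) quantile  inf { t | F_k(t) >= 1 - beta }. *)
Definition q {R : realType} (beta : R) (k : nat) : R :=
  inf [set t : R | ((1 - beta)%:E <= maxabs_cdf k t)%E].

(* hat gamma = argmax_{gamma in {1,2}} y_gamma (ties broken towards 1). *)
Definition gamma_hat {R : realType} (y : R * R) : nat :=
  if y.2 <= y.1 then 1%N else 2%N.

Definition y_of {R : realType} (y : R * R) (g : nat) : R :=
  if g == 1%N then y.1 else y.2.

Definition mu_of {R : realType} (m1 m2 : R) (g : nat) : R :=
  if g == 1%N then m1 else m2.

Definition card_Gamma_plus {R : realType} (nu : R) (y : R * R) : nat :=
  if `|y.2 - y.1| <= 2 * Num.sqrt 2 * q nu 1 then 2%N else 1%N.

Definition coverage_event {R : realType} (m1 m2 alpha nu : R) : set (R * R) :=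
  [set y | `|mu_of m1 m2 (gamma_hat y) - y_of y (gamma_hat y)|
             <= q (alpha - nu) (card_Gamma_plus nu y)].

(* Main.v *)
Require Import Defs.
From HB Require Import structures.
From mathcomp Require Import all_boot all_order all_algebra.
From mathcomp Require Import all_classical all_reals all_analysis.
From mathcomp Require Import measurable_realfun.
From mathcomp Require Import ring lra.
Import Order.TTheory GRing.Theory Num.Theory.
Local Open Scope classical_set_scope.
Local Open Scope ring_scope.
Lemma measurable_refl (R : realType) (c : R) :
  measurable_fun setT (fun x : R => c - x).
Proof. by apply: measurable_funB. Qed.

Lemma leb_refl (R : realType) (c : R) (A : set (measurableTypeR R)) : measurable A ->
  lebesgue_measure ((fun x : measurableTypeR R => c - x) @^-1` A) = lebesgue_measure A.
Proof.
move=> mA; apply/esym.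
have h := (@lebesgue_measure_unique R (@pushforward _ _ (measurableTypeR R) (measurableTypeR R) R lebesgue_measure (fun x => c - x)) _ A mA).
apply: h; first exact: measurable_refl.
move=> _ _ [[a b] _ <-] /=.
rewrite /pushforward.
have -> : (fun x => c - x) @^-1` `]a, b]%classic = `[c - b, c - a[%classic.
  apply/seteqP; split => x /=; rewrite !in_itv /=.
    by move=> /andP[h1 h2]; apply/andP; split; lra.
  by move=> /andP[h1 h2]; apply/andP; split; lra.
rewrite !lebesgue_measure_itv /= !lte_fin.
have -> : (c - b < c - a) = (a < b) by rewrite ltrD2l ltrN2.
case: ifP => // _; rewrite -!EFinD; congr (_%:E); lra.
Qed.

Lemma normal_refl (R : realType) (m1 m2 : R) (B : set R) : measurable B ->
  normal_prob m1 1 ((fun x => m1 + m2 - x) @^-1` B) = normal_prob m2 1 B.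
Proof.
move=> mB; rewrite /normal_prob.
transitivity (\int[@pushforward _ _ (measurableTypeR R) (measurableTypeR R) R lebesgue_measure (fun x => (m1 + m2 - x)%R)]_(x in (B : set (measurableTypeR R))) (normal_pdf m2 1 x)%:E)%E; last first.
  apply: eq_measure_integral; first exact: measurable_refl.
  move=> ? A mA _ /=; rewrite /pushforward; exact: (@leb_refl R (m1 + m2) A mA).
rewrite ge0_integral_pushforward //; last 3 first.
- exact: measurable_refl.
- by apply/measurable_EFinP; apply: measurable_funTS; exact: measurable_normal_pdf.
- by move=> x _; rewrite lee_fin normal_pdf_ge0.
apply: eq_integral => x _ /=.
rewrite /normal_pdf oner_eq0 /normal_fun; congr (_%:E); congr (_ * expR _).
by congr (- _ / _); ring.
Qed.

Definition sig2 {R : realType} (c : R) (y : R * R) : R * R := (c - y.2, c - y.1).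

Lemma measurable_sig2 (R : realType) (c : R) : measurable_fun setT (@sig2 R c).
Proof.
apply: measurable_fun_pair.
- by apply: measurable_funB => //; exact: measurable_snd.
- by apply: measurable_funB => //; exact: measurable_fst.
Qed.

Lemma prod_swap (R : realType) (m1 m2 : R) (A : set (R * R)) : measurable A ->
  (normal_prob m1 1 \x normal_prob m2 1)%E (sig2 (m1 + m2) @^-1` A) =
  (normal_prob m1 1 \x normal_prob m2 1)%E A.
Proof.
move=> mA.
rewrite [RHS](@product_measure_unique _ _ _ _ R (normal_prob m1 1) (normal_prob m2 1) (@pushforward _ _ (measurableTypeR R * measurableTypeR R)%type (measurableTypeR R * measurableTypeR R)%type R (normal_prob m1 1 \x normal_prob m2 1)%E (sig2 (m1 + m2))) _ A mA) //.
- exact: measurable_sig2.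
- move=> ? A1 A2 mA1 mA2 /=; rewrite /pushforward.
  have -> : sig2 (m1 + m2) @^-1` (A1 `*` A2) =
     ((fun x => m1 + m2 - x) @^-1` A2) `*` ((fun x => m1 + m2 - x) @^-1` A1).
    by apply/seteqP; split => -[x y] [] /= h1 h2; split.
  rewrite product_measure1E; last 2 first.
  + by rewrite -[X in measurable X]setTI; apply: measurable_refl.
  + by rewrite -[X in measurable X]setTI; apply: measurable_refl.
  have mA1' : measurable (A1 : set R) by exact: mA1.
  have mA2' : measurable (A2 : set R) by exact: mA2.
  have h1 := @normal_refl R m1 m2 _ mA2'; have h2 := @normal_refl R m2 m1 _ mA1'; rewrite (addrC m2 m1) in h2.
  by rewrite /= h1 h2 muleC.
Qed.
Lemma mset_le d (T : measurableType d) (R : realType) (f g : T -> R) :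
  measurable_fun setT f -> measurable_fun setT g -> measurable [set x | f x <= g x].
Proof. by move=> mf mg; have := measurable_fun_le measurableT mf mg; rewrite setTI. Qed.

Lemma mset_lt d (T : measurableType d) (R : realType) (f g : T -> R) :
  measurable_fun setT f -> measurable_fun setT g -> measurable [set x | f x < g x].
Proof.
move=> mf mg; rewrite (_ : [set x | f x < g x] = ~` [set x | g x <= f x]).
  exact/measurableC/mset_le.
by apply/seteqP; split => x /=; rewrite ltNge => /negP.
Qed.

Section QF.
Variable R : realType.
Local Open Scope ereal_scope.

Definition F1 (s : R) := normal_prob (0:R) 1 [set z : R | (`|z| <= s)%R].

Lemma mabs_le (s : R) : measurable [set z : R | (`|z| <= s)%R].
Proof. by apply: mset_le => //; exact: measurable_cst. Qed.

Lemma F1_ge0 s : 0 <= F1 s.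
Proof. exact: measure_ge0. Qed.

Lemma F1_le1 s : F1 s <= 1.
Proof. by apply: probability_le1; exact: mabs_le. Qed.

Lemma F1_mono s s' : (s <= s')%R -> F1 s <= F1 s'.
Proof.
move=> ss'; apply: le_measure; rewrite ?inE; try exact: mabs_le.
by move=> z /= /le_trans; apply.
Qed.

Lemma F1_neg s : (s < 0)%R -> F1 s = 0.
Proof.
move=> s0; rewrite /F1 (_ : [set z | _] = set0) ?measure0 //.
apply/seteqP; split => z //= hz.
by have := le_lt_trans (normr_ge0 z) (le_lt_trans hz s0); rewrite ltxx.
Qed.

Lemma F1_fin s : F1 s \is a fin_num.
Proof. by rewrite ge0_fin_numE ?F1_ge0 // (le_lt_trans (F1_le1 s)) ?ltry. Qed.

Lemma F1_large (x : R) : (x < 1)%R -> exists s, x%:E <= F1 s.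
Proof.
move=> x1; pose G (n : nat) := [set z : R | (`|z| <= n%:R)%R].
have mG n : measurable (G n) by exact: mabs_le.
have UG : \bigcup_n G n = setT.
  apply/seteqP; split => z // _; exists (Num.bound `|z|) => //.
  by rewrite /G /=; apply/ltW/archi_boundP.
have ndG : nondecreasing_seq G.
  by move=> n m nm; apply/subsetPset => z; rewrite /G /= => /le_trans; apply; rewrite ler_nat.
have mU : measurable (\bigcup_n G n) by rewrite UG.
have cv := @nondecreasing_cvg_mu _ _ R (normal_prob (0:R) 1) G mG mU ndG.
have h1 : normal_prob (0:R) 1 [set: R] = 1 by exact: probability_setT.
rewrite UG /= in cv; rewrite h1 in cv.
apply/not_existsP => H.
have : lim ((normal_prob (0:R) 1 \o G) @ \oo) <= x%:E.
  apply: lime_le; first by apply/cvg_ex; exists 1.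
  by near=> n; have /negP := H n%:R; rewrite -ltNge => /ltW.
rewrite (cvg_lim _ cv) // lee_fin => /(lt_le_trans x1); rewrite ltxx.
Unshelve. all: by end_near.
Qed.

Lemma F1_rc (t : R) (y : \bar R) :
  (forall s, (t < s)%R -> y <= F1 s) -> y <= F1 t.
Proof.
move=> H; pose G (n : nat) := [set z : R | (`|z| <= t + n.+1%:R^-1)%R].
have mG n : measurable (G n) by exact: mabs_le.
have IG : \bigcap_n G n = [set z : R | (`|z| <= t)%R].
  apply/seteqP; split => z /=.
    move=> Hz; apply/ler_addgt0Pr => e e0.
    have [N _ HN] := near_infty_natSinv_lt (PosNum e0).
    apply: (le_trans (Hz N I)); rewrite lerD2l; apply/ltW.
    exact: (HN N (leqnn N)).
  move=> Hz n _; rewrite /G /= (le_trans Hz) // lerDl invr_ge0 //.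
have niG : nonincreasing_seq G.
  move=> n m nm; apply/subsetPset => z; rewrite /G /= => /le_trans; apply; rewrite lerD2l.
  by rewrite lef_pV2 ?posrE ?ltr0Sn // ler_nat ltnS.
have mI : measurable (\bigcap_n G n) by rewrite IG; exact: mabs_le.
have G0 : normal_prob (0:R) 1 (G 0%N) < +oo.
  by apply: (le_lt_trans (probability_le1 (normal_prob (0:R) 1) (mG 0%N))); exact: ltry.
have cv := @nonincreasing_cvg_mu _ _ R (normal_prob (0:R) 1) G G0 mG mI niG.
rewrite IG in cv.
rewrite /F1 -(cvg_lim _ cv) //; apply: lime_ge; first by apply/cvg_ex; eexists; exact: cv.
near=> n; apply: H; rewrite ltrDl invr_gt0 ltr0Sn //.
Unshelve. all: by end_near.
Qed.

Lemma mcdf1 (s : R) : maxabs_cdf 1 s = F1 s.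
Proof. by []. Qed.

Lemma mcdf2 (s : R) : maxabs_cdf 2 s = F1 s * F1 s.
Proof.
rewrite /maxabs_cdf /= /std_normal2.
rewrite (_ : [set z : R * R | _] = [set z : R | (`|z| <= s)%R] `*` [set z : R | (`|z| <= s)%R]).
  by rewrite product_measure1E //; exact: mabs_le.
by apply/seteqP; split => -[a b] /=; rewrite ge_max => /andP.
Qed.

Lemma F1_sq (s : R) : F1 s * F1 s <= F1 s.
Proof.
rewrite -(fineK (F1_fin s)) -EFinM lee_fin.
have h0 : (0 <= fine (F1 s))%R by rewrite fine_ge0 // F1_ge0.
have h1 : (fine (F1 s) <= 1)%R by rewrite -lee_fin fineK ?F1_le1 // F1_fin.
by nra.
Qed.

Lemma S1_lb (b : R) : (0 < b)%R -> (b < 1)%R ->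
  lbound [set t : R | (1 - b)%:E <= maxabs_cdf 1 t] 0%R.
Proof.
move=> b0 b1 s /=; rewrite mcdf1 => hs; rewrite leNgt; apply/negP => s0.
by move: hs; rewrite F1_neg // lee_fin; lra.
Qed.

Lemma S1_ne (b : R) : (0 < b)%R -> (b < 1)%R ->
  [set t : R | (1 - b)%:E <= maxabs_cdf 1 t] !=set0.
Proof.
move=> b0 b1; have /F1_large [s hs] : ((1 - b) < 1)%R by lra.
by exists s.
Qed.

Lemma q1_spec (b : R) : (0 < b)%R -> (b < 1)%R -> (1 - b)%:E <= F1 (q b 1).
Proof.
move=> b0 b1; apply: F1_rc => s ts.
have [e Se es] := inf_lt (@S1_ne b b0 b1) ts.
by apply: (le_trans Se); rewrite mcdf1; apply: F1_mono; exact: ltW.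
Qed.

Lemma q12 (b : R) : (0 < b)%R -> (b < 1)%R -> (q b 1 <= q b 2)%R.
Proof.
move=> b0 b1; rewrite /q; apply: lb_le_inf.
- have /F1_large [s hs] : ((1 - b / 2) < 1)%R by lra.
  exists s => /=; rewrite mcdf2.
  move: hs; rewrite -(fineK (F1_fin s)) -EFinM !lee_fin => hs; nra.
- move=> s /=; rewrite mcdf2 => hs.
  apply: (ge_inf (E := [set t : R | (1 - b)%:E <= maxabs_cdf 1 t])).
    by exists 0%R; exact: S1_lb.
  by rewrite /= mcdf1; apply: (le_trans hs); exact: F1_sq.
Qed.

End QF.

Lemma meas_if d (T : measurableType d) (P A B : T -> bool) :
  measurable [set y | P y] -> measurable [set y | A y] -> measurable [set y | B y] ->
  measurable [set y | if P y then A y else B y].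
Proof.
move=> mP mA mB.
rewrite (_ : [set y | _] = ([set y | P y] `&` [set y | A y]) `|` (~` [set y | P y] `&` [set y | B y])).
  by apply: measurableU; apply: measurableI => //; exact: measurableC.
apply/seteqP; split => y /=; case: (P y) => h; try by [left|right].
- by case: h => -[].
- by case: h => -[].
Qed.

Section Main.
Variables (R : realType) (mu1 mu2 : R).

Lemma mD : measurable [set y : R * R | y.2 <= y.1].
Proof. by apply: mset_le; [exact: measurable_snd | exact: measurable_fst]. Qed.

Lemma mC (K : R) : measurable [set y : R * R | `|y.2 - y.1| <= K].
Proof.
apply: mset_le => //; apply: measurableT_comp => //.
by apply: measurable_funB; [exact: measurable_snd | exact: measurable_fst].
Qed.

Lemma mA1 (Q : R) : measurable [set y : R * R | `|mu1 - y.1| <= Q].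
Proof.
apply: mset_le => //; apply: measurableT_comp => //.
by apply: measurable_funB => //; exact: measurable_fst.
Qed.

Lemma mA2 (Q : R) : measurable [set y : R * R | `|mu2 - y.2| <= Q].
Proof.
apply: mset_le => //; apply: measurableT_comp => //.
by apply: measurable_funB => //; exact: measurable_snd.
Qed.

End Main.

Theorem mainTheorem9 (R : realType) (mu1 mu2 alpha nu : R) :
  0 < alpha -> alpha < 1 -> 0 < nu -> nu < alpha ->
  ((1 - alpha)%:E <=
     (normal_prob mu1 1 \x normal_prob mu2 1) (coverage_event mu1 mu2 alpha nu))%E.
Proof.
move=> a0 a1 n0 na.
have b0 : 0 < alpha - nu by lra.
have b1 : alpha - nu < 1 by lra.
pose t := q (alpha - nu) 1.
pose K := 2 * Num.sqrt 2 * q nu 1.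
pose G := [set y : R * R | if y.2 <= y.1 then `|mu1 - y.1| <= t else `|mu2 - y.2| <= t].
have mG : measurable G.
  by apply: meas_if; [exact: mD | exact: mA1 | exact: mA2].
have eCov : coverage_event mu1 mu2 alpha nu =
  [set y : R * R | if y.2 <= y.1 then
     (if `|y.2 - y.1| <= K then `|mu1 - y.1| <= q (alpha - nu) 2 else `|mu1 - y.1| <= t)
   else
     (if `|y.2 - y.1| <= K then `|mu2 - y.2| <= q (alpha - nu) 2 else `|mu2 - y.2| <= t)].
  apply/seteqP; split => y; rewrite /coverage_event /gamma_hat /card_Gamma_plus /=;
    by case: ifP => h1; case: ifP => h2.
have mCov : measurable (coverage_event mu1 mu2 alpha nu).
  rewrite eCov; apply: meas_if; first exact: mD.
  - by apply: meas_if; [exact: mC | exact: mA1 | exact: mA1].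
  - by apply: meas_if; [exact: mC | exact: mA2 | exact: mA2].
have GC : G `<=` coverage_event mu1 mu2 alpha nu.
  have tq := @q12 R (alpha - nu) b0 b1.
  rewrite eCov => y; rewrite /G /=.
  by case: ifP => _; case: ifP => _ // h; apply: (le_trans h).
have := @le_measure _ R _ (normal_prob mu1 1 \x normal_prob mu2 1)%E G (coverage_event mu1 mu2 alpha nu).
rewrite !inE => /(_ mG mCov GC) hle; apply: (le_trans _ hle).
pose G1 := [set y : R * R | y.2 <= y.1 /\ `|mu1 - y.1| <= t].
pose G1' := [set y : R * R | y.2 <= y.1 /\ `|mu2 - y.2| <= t].
pose G2 := [set y : R * R | ~ (y.2 <= y.1) /\ `|mu2 - y.2| <= t].
pose B := [set x : R | `|mu2 - x| <= t].
have mG1 : measurable G1 by apply: measurableI; [exact: mD | exact: mA1].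
have mG1' : measurable G1' by apply: measurableI; [exact: mD | exact: mA2].
have mG2 : measurable G2.
  by apply: measurableI; [apply: measurableC; exact: mD | exact: mA2].
have mB : measurable B.
  by apply: mset_le => //; apply: measurableT_comp => //; exact: measurable_refl.
have eG : G = G1 `|` G2.
  apply/seteqP; split => y; rewrite /G /G1 /G2 /=.
    by case: ifP => h1 h2; [left | right; split => //; rewrite h1].
  by case=> -[h1 h2]; rewrite ?h1 //; move/negP: h1 => /negbTE ->.
have d12 : G1 `&` G2 = set0.
  by apply/seteqP; split => y // [[h1 _] [h2 _]].
have d1'2 : G1' `&` G2 = set0.
  by apply/seteqP; split => y // [[h1 _] [h2 _]].
have e1 : G1 = sig2 (mu1 + mu2) @^-1` G1'.
  apply/seteqP; split => -[y1 y2]; rewrite /G1 /G1' /sig2 /=;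
    rewrite lerD2l lerN2 (_ : mu2 - (mu1 + mu2 - y1) = - (mu1 - y1)) ?normrN //; ring.
have e2 : G1' `|` G2 = setT `*` B.
  apply/seteqP; split => -[y1 y2]; rewrite /G1' /G2 /B /=.
    by case=> -[].
  move=> [_ h]; case: (boolP (y2 <= y1)) => h1; [left | right] => //.
have e3 : [set z : R | `|z| <= t] = (fun x => 0 + mu2 - x) @^-1` B.
  apply/seteqP; split => z; rewrite /B /= add0r opprB addrC subrK //.
have eP : (normal_prob mu1 1 \x normal_prob mu2 1)%E G = @F1 R t.
  have hs := @prod_swap R mu1 mu2 G1' mG1'; rewrite -e1 in hs.
  rewrite eG measureU //= hs.
  have hu := @measureU _ _ _ (normal_prob mu1 1 \x normal_prob mu2 1)%E G1' G2 mG1' mG2 d1'2.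
  rewrite /= in hu; rewrite -hu e2.
  rewrite product_measure1E //=.
  have h1 : normal_prob mu1 1 [set: R] = 1%E by exact: probability_setT.
  rewrite h1 mul1e /F1 e3.
  by rewrite normal_refl.
rewrite /= eP; apply: le_trans (@q1_spec R (alpha - nu) b0 b1).
by rewrite lee_fin; lra.
Qed.
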